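(* If $H$ is a finite graph, then there exists a $3$-edge-coloring $c:E(H)\to\{1,2,3\}$ of $H$ such that every vertex $v$ with $d_H(v)\ge 4$ is majority colored.
   Context: A vertex $v$ is majority colored if for every color $\alpha$, the number of edges incident to $v$ colored $\alpha$ is at most the number of edges incident to $v$ not colored $\alpha$. *)

(* Defs.v *)
From mathcomp Require Import all_boot.
Set Implicit Arguments. Unset Strict Implicit. Unset Printing Implicit Defensive.

(* A finite simple graph: vertex type V (a finType) with a symmetric,
   irreflexive adjacency relation e.
   An edge-colouring with k colours is a function c : V -> V -> 'I_k that is
   symmetric (c x y = c y x), so that it is well defined on unordered edges;
   only its values on edges (e x y) matter. *)

Definition deg (V : finType) (e : rel V) (v : V) : nat := #|[set u | e v u]|.

Definition col_deg (V : finType) (e : rel V) (k : nat) (c : V -> V -> 'I_k)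
  (v : V) (a : 'I_k) : nat := #|[set u | e v u && (c v u == a)]|.

Definition noncol_deg (V : finType) (e : rel V) (k : nat) (c : V -> V -> 'I_k)
  (v : V) (a : 'I_k) : nat := #|[set u | e v u && (c v u != a)]|.

Definition majority_colored (V : finType) (e : rel V) (k : nat)
  (c : V -> V -> 'I_k) (v : V) : Prop :=
  forall a : 'I_k, col_deg e c v a <= noncol_deg e c v a.

(* Main.v *)
Require Import Defs.
From mathcomp Require Import all_boot.
From mathcomp Require Import zify.
Set Implicit Arguments. Unset Strict Implicit. Unset Printing Implicit Defensive.

Lemma card_sum (T : finType) (A : pred T) : #|[set x | A x]| = \sum_x (A x : nat).
Proof.
rewrite -sum1_card big_mkcond /=; apply: eq_bigr => x _; rewrite inE; by case: (A x).
Qed.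

Lemma sum_card_part (T M : finType) (Q : pred T) (f : T -> M) (Z : {set M}) :
  \sum_(y in Z) #|[set x | Q x && (f x == y)]| = #|[set x | Q x && (f x \in Z)]|.
Proof.
under eq_bigr => y _ do rewrite card_sum.
rewrite exchange_big card_sum; apply: eq_bigr => x _.
case: (boolP (f x \in Z)) => Hf.
  rewrite (bigD1 (f x)) //= eqxx andbT big1 ?addn0 // => y /andP[_ Hy].
  by rewrite eq_sym (negbTE Hy) andbF.
rewrite andbF big1 // => y Hy; case: eqP => [Hfy|]; last by rewrite andbF.
by move: Hf; rewrite Hfy Hy.
Qed.

Lemma arith_y S o' i' o i : i' + 1 = i + 0 -> o' + 0 = o + 1 -> o < i ->
  S + o' ^ 2 + i' ^ 2 <= S + o ^ 2 + i ^ 2.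
Proof. move=> A B C; have -> : o' = o + 1 by lia. have Hi : i = i' + 1 by lia. subst i. nia. Qed.

Lemma arith_x S o' i' o i : i' + 0 = i + 1 -> o' + 1 = o + 0 -> i.+1 < o ->
  S + o' ^ 2 + i' ^ 2 < S + o ^ 2 + i ^ 2.
Proof. move=> A B C; have -> : i' = i + 1 by lia. have Ho : o = o' + 1 by lia. subst o. nia. Qed.

Section GL.
Variables (E V : finType) (P : pred E) (l r : E -> V) (k : nat).
Local Notation N := (V * bool)%type.
Local Notation colt := (E -> 'I_k.+1).

Definition endp (s : bool) (x : E) : V := if s then r x else l x.
Definition cnt (col : colt) (n : N) (c : 'I_k.+1) : nat :=
  #|[set x | P x && (endp n.2 x == n.1) && (col x == c)]|.
Definition pot (col : colt) : nat :=
  \sum_(n : N) \sum_(c : 'I_k.+1) (cnt col n c) ^ 2.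

Section Flip.
Variables (al be : 'I_k.+1) (Hab : al != be).
Definition tl (col : colt) x : N := if col x == al then (l x, false) else (r x, true).
Definition hd (col : colt) x : N := if col x == al then (r x, true) else (l x, false).
Definition abp (col : colt) x := P x && ((col x == al) || (col x == be)).
Definition outd col n := #|[set x | abp col x && (tl col x == n)]|.
Definition ind col n := #|[set x | abp col x && (hd col x == n)]|.
Definition D col : rel N := fun n m =>
  [exists x, abp col x && (tl col x == n) && (hd col x == m)].
Definition flip1 (col : colt) (x0 : E) : colt :=
  fun x => if x == x0 then (if col x0 == al then be else al) else col x.

Lemma outdF col v : outd col (v, false) = cnt col (v, false) al.
Proof.
apply: eq_card => x; rewrite !inE /abp /tl /endp /=.
case: eqP => [->|H]; rewrite ?(negbTE Hab) ?xpair_eqE /= ?andbT ?andbF ?orbF //;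
 by case: (col x == be); rewrite ?andbT ?andbF.
Qed.

Lemma indF col v : ind col (v, false) = cnt col (v, false) be.
Proof.
apply: eq_card => x; rewrite !inE /abp /hd /endp /=.
case: eqP => [->|H]; rewrite ?(negbTE Hab) ?xpair_eqE /= ?andbT ?andbF ?orbF //;
 by case: (col x == be); rewrite ?andbT ?andbF.
Qed.

Lemma outdT col v : outd col (v, true) = cnt col (v, true) be.
Proof.
apply: eq_card => x; rewrite !inE /abp /tl /endp /=.
case: eqP => [->|H]; rewrite ?(negbTE Hab) ?xpair_eqE /= ?andbT ?andbF ?orbF //;
 by case: (col x == be); rewrite ?andbT ?andbF.
Qed.

Lemma indT col v : ind col (v, true) = cnt col (v, true) al.
Proof.
apply: eq_card => x; rewrite !inE /abp /hd /endp /=.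
case: eqP => [->|H]; rewrite ?(negbTE Hab) ?xpair_eqE /= ?andbT ?andbF ?orbF //;
 by case: (col x == be); rewrite ?andbT ?andbF.
Qed.


Lemma flip_ne col x0 x : x != x0 -> flip1 col x0 x = col x.
Proof. by rewrite /flip1 => /negbTE ->. Qed.

Lemma flip_abp col x0 x : abp col x0 -> abp (flip1 col x0) x = abp col x.
Proof.
move=> H0; rewrite /abp /flip1; case: (eqVneq x x0) => [->|Hx]; last by [].
move: H0; rewrite /abp => /andP[-> ->].
by case: ifP => _; rewrite eqxx ?orbT.
Qed.

Lemma flip_tl col x0 : abp col x0 -> tl (flip1 col x0) x0 = hd col x0.
Proof.
rewrite /abp /tl /hd /flip1 eqxx => /andP[_ H].
by case: (col x0 == al); rewrite ?eqxx // eq_sym (negbTE Hab).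
Qed.

Lemma flip_hd col x0 : abp col x0 -> hd (flip1 col x0) x0 = tl col x0.
Proof.
rewrite /abp /tl /hd /flip1 eqxx => /andP[_ H].
by case: (col x0 == al); rewrite ?eqxx // eq_sym (negbTE Hab).
Qed.

Lemma flip_tl_ne col x0 x : x != x0 -> tl (flip1 col x0) x = tl col x.
Proof. by move=> H; rewrite /tl flip_ne. Qed.

Lemma flip_hd_ne col x0 x : x != x0 -> hd (flip1 col x0) x = hd col x.
Proof. by move=> H; rewrite /hd flip_ne. Qed.

Lemma flip_outd col x0 n : abp col x0 ->
  outd (flip1 col x0) n + (tl col x0 == n) = outd col n + (hd col x0 == n).
Proof.
move=> H0; rewrite /outd (cardsD1 x0) [in RHS](cardsD1 x0) !inE.
rewrite flip_abp // H0 flip_tl //=.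
have -> : [set x | abp (flip1 col x0) x && (tl (flip1 col x0) x == n)] :\ x0 =
          [set x | abp col x && (tl col x == n)] :\ x0.
  apply/setP => x; rewrite !inE; case: eqP => [//|/eqP Hx] /=.
  by rewrite flip_abp // flip_tl_ne.
lia.
Qed.

Lemma flip_ind col x0 n : abp col x0 ->
  ind (flip1 col x0) n + (hd col x0 == n) = ind col n + (tl col x0 == n).
Proof.
move=> H0; rewrite /ind (cardsD1 x0) [in RHS](cardsD1 x0) !inE.
rewrite flip_abp // H0 flip_hd //=.
have -> : [set x | abp (flip1 col x0) x && (hd (flip1 col x0) x == n)] :\ x0 =
          [set x | abp col x && (hd col x == n)] :\ x0.
  apply/setP => x; rewrite !inE; case: eqP => [//|/eqP Hx] /=.
  by rewrite flip_abp // flip_hd_ne.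
lia.
Qed.

Lemma flip_cnt col x0 n c : abp col x0 -> c != al -> c != be ->
  cnt (flip1 col x0) n c = cnt col n c.
Proof.
move=> H0 Ha Hb; apply: eq_card => x; rewrite !inE.
case: (eqVneq x x0) => [->|Hx]; last by rewrite flip_ne.
rewrite /flip1 eqxx.
move: H0; rewrite /abp => /andP[_ /orP[]/eqP->]; rewrite ?eqxx.
  by rewrite !(eq_sym _ c) (negbTE Ha) (negbTE Hb) !andbF.
by rewrite (eq_sym be al) (negbTE Hab) !(eq_sym _ c) (negbTE Ha) (negbTE Hb) !andbF.
Qed.

Lemma flip_D col x0 u w : u != tl col x0 -> D col u w -> D (flip1 col x0) u w.
Proof.
move=> Hu /existsP[x /andP[/andP[H1 /eqP H2] H3]].
have Hx : x != x0 by apply: contraNneq Hu => <-; rewrite H2.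
apply/existsP; exists x.
rewrite flip_tl_ne // flip_hd_ne // H2 eqxx H3 !andbT.
by rewrite /abp flip_ne.
Qed.

Lemma flip_path p : forall col x, path (D col) x p -> uniq (x :: p) -> p != [::] ->
  exists col', (forall n c, c != al -> c != be -> cnt col' n c = cnt col n c) /\
   (forall n, outd col' n + (x == n) = outd col n + (last x p == n)) /\
   (forall n, ind col' n + (last x p == n) = ind col n + (x == n)).
Proof.
elim: p => [//|z p IH] col x /= /andP[Hxz Hp] /andP[Hx Hu] _.
case/existsP: Hxz => x0 /andP[/andP[H0 /eqP Ht] /eqP Hh].
pose col1 := flip1 col x0.
have C1 : forall n c, c != al -> c != be -> cnt col1 n c = cnt col n c.
  by move=> n c; exact: flip_cnt.
have O1 : forall n, outd col1 n + (x == n) = outd col n + (z == n).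
  by move=> n; rewrite -Ht -Hh; exact: flip_outd.
have I1 : forall n, ind col1 n + (z == n) = ind col n + (x == n).
  by move=> n; rewrite -Ht -Hh; exact: flip_ind.
case: p IH Hp Hu Hx => [|z' p'] IH Hp Hu Hx.
  by exists col1; split => //=.
have Hp1 : path (D col1) z (z' :: p').
  apply: (sub_in_path (P := [pred u | u != x])) Hp.
    move=> u w Hu1 _; apply: flip_D; by rewrite Ht.
  apply/allP => u Hu'; rewrite inE; apply/eqP => Hux.
  by move: Hx; rewrite -Hux Hu'.
have [col2 [C2 [O2 I2]]] := IH col1 z Hp1 Hu isT.
exists col2; split; [|split].
- by move=> n c Ha Hb; rewrite C2 // C1.
- move=> n; have := O2 n; have := O1 n; rewrite /=; lia.
- move=> n; have := I2 n; have := I1 n; rewrite /=; lia.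
Qed.

Lemma reach col n0 : (ind col n0).+1 < outd col n0 ->
  exists y, connect (D col) n0 y /\ outd col y < ind col y.
Proof.
move=> Hn0.
case: (boolP [exists y, connect (D col) n0 y && (outd col y < ind col y)]) =>
  [/existsP[y /andP[H1 H2]]|/existsPn H]; first by exists y.
exfalso.
pose Z := [set y | connect (D col) n0 y].
have Hsub : [set x | abp col x && (tl col x \in Z)] \subset
            [set x | abp col x && (hd col x \in Z)].
  apply/subsetP => x; rewrite !inE => /andP[Ha Hz]; rewrite Ha /=.
  apply: connect_trans Hz _; apply: connect1.
  by apply/existsP; exists x; rewrite Ha !eqxx.
have := subset_leq_card Hsub.
rewrite -!sum_card_part -/(outd col _).
have HZ : n0 \in Z by rewrite inE connect0.
rewrite (bigD1 n0) // [X in _ <= X](bigD1 n0) //=.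
have : \sum_(i in Z | i != n0) #|[set x | abp col x && (hd col x == i)]| <=
       \sum_(i in Z | i != n0) #|[set x | abp col x && (tl col x == i)]|.
  apply: leq_sum => y /andP[Hy _]; have := H y; rewrite inE in Hy; rewrite Hy /= -leqNgt.
  done.
rewrite -/(outd col n0) -/(ind col n0).
move=> A B; have := leq_trans B (leq_add (leqnn _) A); rewrite leq_add2r => C.
by have := leq_ltn_trans C (ltnW Hn0); rewrite ltnn.
Qed.

Lemma Fdec col n : \sum_c cnt col n c ^ 2 =
  \sum_(c | (c != al) && (c != be)) cnt col n c ^ 2 + outd col n ^ 2 + ind col n ^ 2.
Proof.
rewrite (bigD1 al) //= (bigD1 be) /=; last by rewrite eq_sym.
case: n => v [] ; rewrite ?outdT ?indT ?outdF ?indF.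
  by rewrite [RHS]addnC; congr (_ + _); exact: addnC.
by rewrite [RHS]addnAC [RHS]addnC; congr (_ + _); exact: addnC.
Qed.

Lemma improve col n0 : (ind col n0).+1 < outd col n0 -> exists col', pot col' < pot col.
Proof.
move=> Hn0.
have [y [Hc Hy]] := reach Hn0.
have Hne : n0 != y by apply/eqP => E0; rewrite -E0 in Hy; lia.
case/connectP: Hc => p Hp Hl; subst y.
move: Hy Hne; case: (shortenP Hp) => p' Hp' Hu _ Hy Hne.
have Hp'ne : p' != [::] by case: p' Hp' Hu Hy Hne => //=; rewrite eqxx.
have [col' [C [O I]]] := flip_path Hp' Hu Hp'ne.
exists col'.
have HR : forall n, \sum_(c | (c != al) && (c != be)) cnt col' n c ^ 2 =
                    \sum_(c | (c != al) && (c != be)) cnt col n c ^ 2.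
  by move=> n; apply: eq_bigr => c /andP[Ha Hb]; rewrite C.
have Hle : forall n, \sum_c cnt col' n c ^ 2 <= \sum_c cnt col n c ^ 2.
  move=> n; rewrite !Fdec HR.
  have := O n; have := I n.
  case: (eqVneq n0 n) => [<-|Hn1].
    rewrite (eq_sym _ n0) (negbTE Hne) /= => A B; apply: ltnW; exact: arith_x A B Hn0.
  case: (eqVneq (last n0 p') n) => [<-|Hn2] /= A B; first exact: arith_y A B Hy.
  by move: A B; rewrite !addn0 => -> ->.
have Hlt : \sum_c cnt col' n0 c ^ 2 < \sum_c cnt col n0 c ^ 2.
  rewrite !Fdec HR.
  have := O n0; have := I n0.
  rewrite (eq_sym _ n0) (negbTE Hne) eqxx /= => A B; exact: arith_x A B Hn0.
rewrite /pot (bigD1 n0) // [X in _ < X](bigD1 n0) //=.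
rewrite -addSn; apply: leq_add => //; apply: leq_sum => n _; exact: Hle.
Qed.

End Flip.
Definition goodb (col : colt) :=
  [forall n : N, forall a : 'I_k.+1, forall b : 'I_k.+1, cnt col n a <= (cnt col n b).+1].

Lemma step col : ~~ goodb col -> exists col', pot col' < pot col.
Proof.
move/forallPn => [n /forallPn [a /forallPn [b]]]; rewrite -ltnNge => Hb.
have Hab : a != b by apply/eqP => E0; rewrite E0 ltnNge leqnSn in Hb.
case: n Hb => v [] Hb.
  have Hba : b != a by rewrite eq_sym.
  apply: (improve Hba (col := col) (n0 := (v, true))).
  by rewrite (outdT Hba) (indT Hba).
apply: (improve Hab (col := col) (n0 := (v, false))).
by rewrite (outdF Hab) (indF Hab).
Qed.

Lemma exists_good : exists col : colt, forall n a b, cnt col n a <= (cnt col n b).+1.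
Proof.
suff H : forall m (col : colt), pot col <= m ->
    exists col', forall n a b, cnt col' n a <= (cnt col' n b).+1.
  exact: (H _ (fun _ => ord0) (leqnn _)).
elim=> [|m IH] col Hcol.
  case: (boolP (goodb col)) => [Hg|Hng].
    exists col => n a b; move/forallP: Hg => /(_ n) /forallP /(_ a) /forallP /(_ b); done.
  have [col' Hc'] := step Hng; lia.
case: (boolP (goodb col)) => [Hg|Hng].
  exists col => n a b; move/forallP: Hg => /(_ n) /forallP /(_ a) /forallP /(_ b); done.
have [col' Hc'] := step Hng; apply: (IH col'); lia.
Qed.

End GL.
Section Main.
Variables (V : finType) (e : rel V) (e_sym : symmetric e) (e_irr : irreflexive e).

Definition ltv (x y : V) := (enum_rank x < enum_rank y)%N.

Lemma ltv_total x y : x != y -> ltv x y || ltv y x.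
Proof.
move=> Hxy; rewrite /ltv; case: ltngtP => // H.
by move/val_inj/enum_rank_inj: H => H; rewrite H eqxx in Hxy.
Qed.

Lemma ltv_asym x y : ltv x y -> ltv y x = false.
Proof. rewrite /ltv => H; apply/negbTE; rewrite -leqNgt; exact: ltnW. Qed.

Lemma ltv_irr x : ltv x x = false.
Proof. by rewrite /ltv ltnn. Qed.

Definition P1 (p : V * V) := e p.1 p.2 && ltv p.1 p.2.
Definition sorted2 (v u : V) : V * V := if ltv v u then (v, u) else (u, v).

Lemma sum_pair (G : V * V -> nat) : \sum_p G p = \sum_x \sum_y G (x, y).
Proof. by symmetry; rewrite pair_big; apply: eq_big => [p|[x y] _]. Qed.

Lemma split1 v (Q : V * V -> bool) :
  \sum_p (P1 p && (p.1 == v) && Q p : nat) = \sum_u (P1 (v, u) && Q (v, u) : nat).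
Proof.
rewrite sum_pair (bigD1 v) //= [X in _ + X]big1 ?addn0.
  by apply: eq_bigr => u _; rewrite eqxx andbT.
by move=> x Hx; apply: big1 => y _ /=; rewrite (negbTE Hx) andbF.
Qed.

Lemma split2 v (Q : V * V -> bool) :
  \sum_p (P1 p && (p.2 == v) && Q p : nat) = \sum_u (P1 (u, v) && Q (u, v) : nat).
Proof.
rewrite sum_pair; apply: eq_bigr => x _.
rewrite (bigD1 v) //= [X in _ + X]big1 ?addn0.
  by rewrite eqxx andbT.
by move=> y Hy; rewrite (negbTE Hy) andbF.
Qed.

Lemma split_adj v (Q : V * V -> bool) :
  \sum_u (e v u && Q (sorted2 v u) : nat) =
  \sum_p (P1 p && (p.1 == v) && Q p : nat) + \sum_p (P1 p && (p.2 == v) && Q p : nat).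
Proof.
rewrite split1 split2 -big_split /=; apply: eq_bigr => u _.
rewrite /P1 /sorted2 /=.
case: (eqVneq u v) => [->|Huv]; first by rewrite e_irr.
case H: (ltv v u).
  by rewrite ltv_asym // andbT andbF addn0.
have : ltv u v by move: (ltv_total Huv); rewrite H orbF.
by move=> ->; rewrite andbF andbT e_sym.
Qed.

Lemma three (f : 'I_3 -> nat) a : (forall b, f a <= (f b).+1) -> 3 * f a <= \sum_b f b + 2.
Proof.
move=> H.
have E0 : \sum_b f b = f (inord 0) + f (inord 1) + f (inord 2).
  rewrite !big_ord_recl big_ord0 addn0 addnA.
  by congr (f _ + f _ + f _); apply: val_inj; rewrite /= inordK.
have H0 := H (inord 0); have H1 := H (inord 1); have H2 := H (inord 2).
have : a = inord 0 \/ a = inord 1 \/ a = inord 2.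
  case: a {H H0 H1 H2} => [[|[|[|m]]] Ha] //; [left|right;left|right;right];
    by apply: val_inj; rewrite /= inordK.
rewrite E0; case=> [E|[E|E]]; rewrite E in H0 H1 H2 *; lia.
Qed.

Lemma ord2_cases (x : 'I_2) : x != ord0 -> x = ord_max.
Proof. by case: x => [[|[|m]] Hm] // _; apply: val_inj. Qed.

Lemma main_col : exists c : V -> V -> 'I_3,
  (forall x y, c x y = c y x) /\ (forall v, 4 <= deg e v -> majority_colored e c v).
Proof.
have [col1 H1] := exists_good P1 (fun p : V * V => p.1) (fun p => p.2) 1.
pose tail (p : V * V) := if col1 p == ord0 then p.1 else p.2.
pose head (p : V * V) := if col1 p == ord0 then p.2 else p.1.
have [col2 H2] := exists_good P1 tail head 2.
pose c x y := col2 (sorted2 x y).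
exists c; split.
  move=> x y; rewrite /c /sorted2; case: (eqVneq x y) => [->//|Hxy].
  case H: (ltv x y); first by rewrite ltv_asym.
  have : ltv y x by move: (ltv_total Hxy); rewrite H.
  by move=> ->.
move=> v Hd a.
have G : forall Q : V * V -> bool,
  \sum_u (e v u && Q (sorted2 v u) : nat) =
  #|[set p | P1 p && (tail p == v) && Q p]| + #|[set p | P1 p && (head p == v) && Q p]|.
  move=> Q; rewrite split_adj !card_sum -!big_split; apply: eq_bigr => p _ /=.
  rewrite /tail /head; case: (col1 p == ord0) => //; exact: addnC.
pose T b := cnt P1 tail head col2 (v, false) b.
pose R b := cnt P1 tail head col2 (v, true) b.
have HT : forall b, T a <= (T b).+1 := H2 (v, false) a.
have HR : forall b, R a <= (R b).+1 := H2 (v, true) a.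
pose o := #|[set p | P1 p && (tail p == v)]|.
pose i := #|[set p | P1 p && (head p == v)]|.
have Eo : \sum_b T b = o.
  rewrite /T /cnt /endp /=.
  transitivity (\sum_(b in [set: 'I_3]) #|[set x | (P1 x && (tail x == v)) && (col2 x == b)]|).
    by apply: eq_big => [b|b _]; rewrite ?in_setT.
  by rewrite sum_card_part; apply: eq_card => x; rewrite !inE andbT.
have Ei : \sum_b R b = i.
  rewrite /R /cnt /endp /=.
  transitivity (\sum_(b in [set: 'I_3]) #|[set x | (P1 x && (head x == v)) && (col2 x == b)]|).
    by apply: eq_big => [b|b _]; rewrite ?in_setT.
  by rewrite sum_card_part; apply: eq_card => x; rewrite !inE andbT.
have Ecol : col_deg e c v a = T a + R a.
  rewrite /col_deg card_sum; have := G (fun p => col2 p == a); rewrite /= => <-.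
  by rewrite /T /R /cnt /endp /=.
have Edeg : deg e v = o + i.
  rewrite /deg card_sum.
  have := G (fun _ => true); rewrite /= => HG.
  transitivity (\sum_u (e v u && true : nat)); first by apply: eq_bigr => u _; rewrite andbT.
  rewrite HG /o /i; congr (_ + _); apply: eq_card => x; by rewrite !inE andbT.
have Ecn : col_deg e c v a + noncol_deg e c v a = deg e v.
  rewrite /col_deg /noncol_deg /deg !card_sum -big_split; apply: eq_bigr => u _ /=.
  by case: (e v u); case: (c v u == a).
pose S1 b := cnt P1 (fun p : V * V => p.1) (fun p => p.2) col1 (v, false) b.
pose S2 b := cnt P1 (fun p : V * V => p.1) (fun p => p.2) col1 (v, true) b.
have Eo1 : o = S1 ord0 + S2 ord_max.
  rewrite /o /S1 /S2 /cnt /endp /= !card_sum -big_split; apply: eq_bigr => p _ /=.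
  rewrite /tail; case: (eqVneq (col1 p) ord0) => [->|H]; first by rewrite andbT andbF addn0.
  by rewrite (ord2_cases H) andbT andbF.
have Ei1 : i = S1 ord_max + S2 ord0.
  rewrite /i /S1 /S2 /cnt /endp /= !card_sum -big_split; apply: eq_bigr => p _ /=.
  rewrite /head; case: (eqVneq (col1 p) ord0) => [->|H]; first by rewrite andbT andbF add0n.
  by rewrite (ord2_cases H) andbT andbF addn0.
have C1 : S1 ord0 <= (S1 ord_max).+1 := H1 (v, false) ord0 ord_max.
have C2 : S1 ord_max <= (S1 ord0).+1 := H1 (v, false) ord_max ord0.
have C3 : S2 ord0 <= (S2 ord_max).+1 := H1 (v, true) ord0 ord_max.
have C4 : S2 ord_max <= (S2 ord0).+1 := H1 (v, true) ord_max ord0.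
have := three HT; have := three HR.
rewrite Eo Ei => A B.
clearbody S1 S2 T R o i.
lia.
Qed.

End Main.

Theorem mainTheorem11 (V : finType) (e : rel V)
  (e_sym : symmetric e) (e_irr : irreflexive e) :
  exists c : V -> V -> 'I_3,
    (forall x y, c x y = c y x) /\
    (forall v : V, 4 <= deg e v -> majority_colored e c v).
Proof. exact: (main_col e_sym e_irr). Qed.
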